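(* Let $x,y\in\mathbb{H}^2$ and $d=d\big(\tfrac{x+y}{2},\partial\mathbb{H}^2\big)$. Then $$\tilde\tau_{\mathbb{H}^2}(x,y)\ge\begin{cases}\log\Big(1+\sqrt{\frac{|x-y|}{d}}\Big), & |x-y|>2d,\\[1mm] \log\Big(1+\frac{2|x-y|}{\sqrt{4d^2+|x-y|^2}}\Big), & |x-y|\le 2d,\end{cases}$$ and, if $|x-y|<2d$, $$\tilde\tau_{\mathbb{H}^2}(x,y)\le\log\Big(1+\frac{2|x-y|}{\sqrt{4d^2-|x-y|^2}}\Big).$$
   Context: $\mathbb{H}^2=\{(x_1,x_2)\in\mathbb{R}^2:x_2>0\}$, $\partial\mathbb{H}^2$ is the real axis, $d(z,\partial\mathbb{H}^2)$ is Euclidean distance. For a proper subdomain $D\subsetneq\mathbb{R}^n$ and $x,y\in D$, $\tilde\tau_D(x,y)=\log\big(1+\sup_{p\in\partial D}\frac{|x-y|}{\sqrt{|x-p||y-p|}}\big)$ (the scale invariant Cassinian metric). *)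

(* Defs.v *)
From Stdlib Require Import Reals Lra Classical ClassicalEpsilon.
Open Scope R_scope.

Definition pt := (R * R)%type.
Definition dist2 (x y : pt) : R :=
  sqrt ((fst x - fst y)^2 + (snd x - snd y)^2).

Definition inH2 (x : pt) : Prop := 0 < snd x.
Definition in_bdH2 (p : pt) : Prop := snd p = 0.

(* Supremum of a set of reals (least upper bound when it exists;
   junk value 0 otherwise — it always exists in our use). *)
Definition Rsup (E : R -> Prop) : R :=
  match excluded_middle_informative (exists l, is_lub E l) with
  | left h => proj1_sig (constructive_indefinite_description _ h)
  | right _ => 0
  end.

Definition tau_tilde (bd : pt -> Prop) (x y : pt) : R :=
  ln (1 + Rsup (fun r => exists p, bd p /\
         r = dist2 x y / sqrt (dist2 x p * dist2 y p))).

Definition tau_H2 (x y : pt) : R := tau_tilde in_bdH2 x y.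

Definition midpt (x y : pt) : pt := ((fst x + fst y)/2, (snd x + snd y)/2).
Definition d_bdH2 (z : pt) : R := Rabs (snd z).

(* Main.v *)
Require Import Defs.
From Stdlib Require Import Reals.
From Stdlib Require Import Lra Psatz Classical ClassicalEpsilon.
Open Scope R_scope.

Lemma my_ln_le a b : 0 < a -> a <= b -> ln a <= ln b.
Proof. intros Ha Hab. destruct (Rle_lt_or_eq_dec _ _ Hab) as [H|H].
  left; apply ln_increasing; auto. subst; lra. Qed.

Lemma Rsup_spec (E : R -> Prop) :
  (exists r, E r) -> (exists B, forall r, E r -> r <= B) -> is_lub E (Rsup E).
Proof.
  intros Hne [B HB]. unfold Rsup.
  destruct (excluded_middle_informative _) as [h|h].
  - destruct (constructive_indefinite_description _ h) as [l Hl]. exact Hl.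
  - exfalso. apply h. destruct (completeness E) as [m Hm].
    + exists B. intros r Hr. apply HB; auto.
    + exact Hne.
    + exists m; exact Hm.
Qed.

Lemma sqrt4 c : 0 <= c -> sqrt (sqrt (c ^ 4)) = c.
Proof. intros Hc. replace (c^4) with ((c^2)^2) by ring.
  rewrite sqrt_pow2 by nra. apply sqrt_pow2; auto. Qed.

Lemma sumsq a b : 0 <= a ^ 2 + b ^ 2.
Proof. pose proof (pow2_ge_0 a); pose proof (pow2_ge_0 b); lra. Qed.

Lemma sumsq_pos a b : 0 < b -> 0 < a ^ 2 + b ^ 2.
Proof. intros. pose proof (pow2_ge_0 a); assert (0 < b^2) by (apply pow_lt; auto); lra. Qed.

Lemma ss_le a b c : 0 <= a -> 0 <= b -> 0 <= c -> a * b <= c ^ 4 ->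
  sqrt (sqrt a * sqrt b) <= c.
Proof. intros Ha Hb Hc H. rewrite <- sqrt_mult by auto.
  rewrite <- (sqrt4 c Hc). apply sqrt_le_1_alt, sqrt_le_1_alt; auto. Qed.

Lemma ss_ge a b c : 0 <= a -> 0 <= b -> 0 <= c -> c ^ 4 <= a * b ->
  c <= sqrt (sqrt a * sqrt b).
Proof. intros Ha Hb Hc H. rewrite <- sqrt_mult by auto.
  rewrite <- (sqrt4 c Hc) at 1. apply sqrt_le_1_alt, sqrt_le_1_alt; auto. Qed.

Lemma ratio_le t s c : 0 <= t -> 0 < c -> c <= s -> t / s <= t / c.
Proof. intros. unfold Rdiv. apply Rmult_le_compat_l; auto.
  apply Rinv_le_contravar; auto. Qed.

Lemma elem_le t a b c : 0 <= t -> 0 <= a -> 0 <= b -> 0 < c -> c ^ 4 <= a * b ->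
  t / sqrt (sqrt a * sqrt b) <= t / c.
Proof. intros. apply ratio_le; auto. apply ss_ge; auto; lra. Qed.

Lemma elem_ge t a b c : 0 <= t -> 0 < a -> 0 < b -> 0 < c -> a * b <= c ^ 4 ->
  t / c <= t / sqrt (sqrt a * sqrt b).
Proof. intros. apply ratio_le; auto.
  apply sqrt_lt_R0. apply Rmult_lt_0_compat; apply sqrt_lt_R0; auto.
  apply ss_le; auto; lra. Qed.

Lemma max_sq A B M : 0 <= A * B -> A ^ 2 <= M -> B ^ 2 <= M -> (A - B) ^ 2 <= M.
Proof. intros HAB HA HB.
  destruct (Rle_dec (A^2) (B^2)) as [H|H].
  - assert (Rabs A <= Rabs B).
    { apply Rsqr_le_abs_0. unfold Rsqr; simpl in *; lra. }
    assert (A * A <= A * B).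
    { rewrite <- (Rabs_right (A*B)) by lra. rewrite Rabs_mult.
      rewrite <- (Rabs_right (A*A)) by (apply Rle_ge; apply Rle_0_sqr).
      rewrite Rabs_mult. apply Rmult_le_compat_l; auto. apply Rabs_pos. }
    simpl in *; lra.
  - assert (Rabs B <= Rabs A).
    { apply Rsqr_le_abs_0. unfold Rsqr; simpl in *; lra. }
    assert (B * B <= A * B).
    { rewrite <- (Rabs_right (A*B)) by lra. rewrite Rabs_mult.
      rewrite <- (Rabs_right (B*B)) by (apply Rle_ge; apply Rle_0_sqr).
      rewrite Rabs_mult. apply Rmult_le_compat_r; auto. apply Rabs_pos. }
    simpl in *; lra.
Qed.

Lemma sqrt_pow4' z : 0 <= z -> sqrt z ^ 4 = z ^ 2.
Proof. intros. replace (sqrt z ^ 4) with ((sqrt z * sqrt z)^2) by ring.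
  rewrite sqrt_sqrt; auto. Qed.

Theorem theorem3p12 (x y : pt) (hx : inH2 x) (hy : inH2 y) :
  let d := d_bdH2 (midpt x y) in
  let t := dist2 x y in
  (t > 2 * d -> tau_H2 x y >= ln (1 + sqrt (t / d))) /\
  (t <= 2 * d -> tau_H2 x y >= ln (1 + 2 * t / sqrt (4 * d ^ 2 + t ^ 2))) /\
  (t < 2 * d -> tau_H2 x y <= ln (1 + 2 * t / sqrt (4 * d ^ 2 - t ^ 2))).
Proof.
  destruct x as [x1 x2], y as [y1 y2]. unfold inH2 in *; simpl in *.
  unfold tau_H2, tau_tilde, d_bdH2, midpt. simpl.
  set (T2 := (x1 - y1) ^ 2 + (x2 - y2) ^ 2).
  assert (Ht : dist2 (x1, x2) (y1, y2) = sqrt T2) by reflexivity.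
  rewrite Ht. clear Ht.
  assert (HT2 : 0 <= T2) by (unfold T2; apply Rplus_le_le_0_compat; apply pow2_ge_0).
  assert (Htt : sqrt T2 ^ 2 = T2) by (simpl; rewrite Rmult_1_r; apply sqrt_sqrt; auto).
  assert (Ht0 : 0 <= sqrt T2) by apply sqrt_pos.
  rewrite Rabs_right by lra.
  set (d := (x2 + y2) / 2). assert (Hd : 0 < d) by (unfold d; lra).
  set (t := sqrt T2).
  assert (Htt' : t ^ 2 = T2) by exact Htt. assert (Ht0' : 0 <= t) by exact Ht0.
  set (E := fun r => exists p : pt, in_bdH2 p /\
        r = t / sqrt (dist2 (x1, x2) p * dist2 (y1, y2) p)).
  assert (Hmem : forall q, E (t / sqrt (sqrt ((x1 - q)^2 + (x2 - 0)^2) *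
                                        sqrt ((y1 - q)^2 + (y2 - 0)^2)))).
  { intros q. exists (q, 0). split; [reflexivity|reflexivity]. }
  assert (Hel : forall r, E r -> exists q, r = t / sqrt (sqrt ((x1 - q)^2 + (x2 - 0)^2) *
                                        sqrt ((y1 - q)^2 + (y2 - 0)^2))).
  { intros r [[q z] [Hz Hr]]. unfold in_bdH2 in Hz; simpl in Hz. subst z.
    exists q. exact Hr. }
  assert (Hub : forall r, E r -> r <= t / sqrt (x2 * y2)).
  { intros r Hr. destruct (Hel r Hr) as [q ->]. apply elem_le; [exact Ht0 | apply sumsq | apply sumsq | apply sqrt_lt_R0; nra | ].
    replace (sqrt (x2 * y2) ^ 4) with ((sqrt (x2*y2) ^2)^2) by ring.
    replace (sqrt (x2 * y2) ^ 2) with (x2 * y2)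
      by (simpl; rewrite Rmult_1_r, sqrt_sqrt; nra).
    replace ((x2 * y2)^2) with ((x2^2) * (y2^2)) by ring.
    pose proof (pow2_ge_0 (x1 - q)); pose proof (pow2_ge_0 (y1 - q)).
    apply Rmult_le_compat; try (apply pow2_ge_0); rewrite Rminus_0_r; lra. }
  assert (Hlub : is_lub E (Rsup E)).
  { apply Rsup_spec. eexists; apply (Hmem 0). exists (t / sqrt (x2 * y2)); auto. }
  destruct Hlub as [Hlub1 Hlub2].
  assert (Hge0 : forall r, E r -> 0 <= r).
  { intros r Hr. destruct (Hel r Hr) as [q ->]. unfold Rdiv.
    apply Rmult_le_pos; auto. left; apply Rinv_0_lt_compat, sqrt_lt_R0.
    apply Rmult_lt_0_compat; apply sqrt_lt_R0; apply sumsq_pos; lra. }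
  assert (HS0 : 0 <= Rsup E) by (eapply Rle_trans; [apply (Hge0 _ (Hmem 0))| apply Hlub1, Hmem]).
  set (u1 := (x1 - y1)/2). set (u2 := (x2 - y2)/2). set (m1 := (x1 + y1)/2).
  assert (HT2u : T2 = 4 * (u1^2 + u2^2)) by (unfold T2, u1, u2; field).
  assert (Hx1 : x1 = m1 + u1) by (unfold m1, u1; field).
  assert (Hy1 : y1 = m1 - u1) by (unfold m1, u1; field).
  assert (Hx2 : x2 = d + u2) by (unfold d, u2; field).
  assert (Hy2 : y2 = d - u2) by (unfold d, u2; field).
  split; [|split].
  -
    intros Hgt. assert (Htp : 0 < t) by lra.
    assert (Hr : d ^ 2 < u1 ^ 2 + u2 ^ 2).
    { assert (t^2 > 4*d^2) by (simpl; nra).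
      rewrite Htt', HT2u in H. lra. }
    assert (Hu2 : u2 ^ 2 < d ^ 2).
    { assert (0 < x2 * y2) by nra. rewrite Hx2, Hy2 in H. simpl; nra. }
    set (sg := sqrt (u1 ^ 2 + u2 ^ 2 - d ^ 2)).
    assert (Hsg : sg ^ 2 = u1 ^ 2 + u2 ^ 2 - d ^ 2)
      by (unfold sg; apply pow2_sqrt; lra).
    assert (Hsg0 : 0 <= sg) by apply sqrt_pos.
    assert (Hex : exists sv, sv ^ 2 = u1 ^ 2 + u2 ^ 2 - d ^ 2 /\ 0 <= (u1 * d) * (u2 * sv)).
    { destruct (Rle_dec 0 (u1 * u2)) as [Hs|Hs].
      - exists sg. split; auto. replace (u1 * d * (u2 * sg)) with (d * (u1 * u2) * sg) by ring.
        apply Rmult_le_pos; [apply Rmult_le_pos|]; lra.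
      - exists (- sg). split. rewrite <- Hsg; ring.
        replace (u1 * d * (u2 * - sg)) with (d * (- (u1 * u2)) * sg) by ring.
        apply Rmult_le_pos; [apply Rmult_le_pos|]; lra. }
    destruct Hex as [sv [Hsv2 Hsv]].
    apply Rle_ge; apply my_ln_le;
    (try (pose proof (sqrt_pos (t / d)); lra));
    apply Rplus_le_compat_l;
    (eapply Rle_trans; [| apply Hlub1; apply (Hmem (m1 - sv))]);
    (replace (sqrt (t / d)) with (t / sqrt (t * d))
      by (rewrite sqrt_mult, sqrt_div_alt by lra;
          rewrite <- (sqrt_sqrt t) at 1 by lra; field;
          split; apply Rgt_not_eq, sqrt_lt_R0; lra));
    (apply elem_ge; [lra | apply sumsq_pos; lra | apply sumsq_pos; lra |
                     apply sqrt_lt_R0; nra | ]);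
    rewrite sqrt_pow4' by nra;
    (replace ((x1 - (m1 - sv)) ^ 2 + (x2 - 0) ^ 2) with ((u1 + sv)^2 + (d+u2)^2)
      by (rewrite Hx1, Hx2; ring));
    (replace ((y1 - (m1 - sv)) ^ 2 + (y2 - 0) ^ 2) with ((sv - u1)^2 + (d-u2)^2)
      by (rewrite Hy1, Hy2; ring));
    (replace (((u1 + sv)^2 + (d+u2)^2) * ((sv - u1)^2 + (d-u2)^2)) with
        (4 * (u1 * d - u2 * sv)^2 + (sv^2 + d^2 - (u1^2+u2^2))^2) by ring);
    replace (t * d) with (d * t) by ring;
    rewrite Rpow_mult_distr;
    rewrite Htt', HT2u, Hsv2;
    (assert (Hm : (u1 * d - u2 * sv)^2 <= (u1^2+u2^2) * d^2)
      by (apply max_sq; [lra | rewrite Rpow_mult_distr; nra |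
          rewrite Rpow_mult_distr, Hsv2; nra]));
    nra.
  -
    intros Hle.
    assert (Hc : 0 < 4 * d ^ 2 + t ^ 2) by (simpl; nra).
    assert (0 <= 2 * t / sqrt (4 * d ^ 2 + t ^ 2)).
    { unfold Rdiv. apply Rmult_le_pos; [lra|]. left; apply Rinv_0_lt_compat, sqrt_lt_R0; lra. }
    apply Rle_ge; apply (my_ln_le (1 + 2 * t / sqrt (4 * d ^ 2 + t ^ 2))); [lra|].
    apply Rplus_le_compat_l.
    eapply Rle_trans; [| apply Hlub1; apply (Hmem m1)].
    replace (2 * t / sqrt (4 * d ^ 2 + t ^ 2)) with (t / (sqrt (4 * d ^ 2 + t ^ 2) / 2))
      by (field; apply Rgt_not_eq, sqrt_lt_R0; lra).
    pose proof (sqrt_lt_R0 _ Hc).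
    apply elem_ge; [lra | apply sumsq_pos; lra | apply sumsq_pos; lra | lra | ].
    replace ((sqrt (4 * d ^ 2 + t ^ 2) / 2) ^ 4) with (sqrt (4 * d ^ 2 + t ^ 2) ^ 4 / 16) by field.
    rewrite sqrt_pow4' by lra.
    replace ((x1 - m1) ^ 2 + (x2 - 0) ^ 2) with (u1 ^ 2 + (d + u2) ^ 2) by (rewrite Hx1, Hx2; ring).
    replace ((y1 - m1) ^ 2 + (y2 - 0) ^ 2) with (u1 ^ 2 + (d - u2) ^ 2) by (rewrite Hy1, Hy2; ring).
    rewrite Htt', HT2u.
    replace ((u1 ^ 2 + (d + u2) ^ 2) * (u1 ^ 2 + (d - u2) ^ 2)) with
      ((u1^2 + u2^2 + d^2)^2 - 4 * d^2 * u2^2) by ring.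
    replace ((4 * d ^ 2 + 4 * (u1 ^ 2 + u2 ^ 2)) ^ 2 / 16) with ((u1^2 + u2^2 + d^2)^2) by field.
    assert (0 <= d ^ 2 * u2 ^ 2) by (apply Rmult_le_pos; apply pow2_ge_0).
    lra.
  -
    intros Hlt.
    assert (Hc : 0 < 4 * d ^ 2 - t ^ 2) by (simpl; nra).
    pose proof (sqrt_lt_R0 _ Hc).
    change (ln (1 + Rsup E) <= ln (1 + 2 * t / sqrt (4 * d ^ 2 - t ^ 2))).
    replace (2 * t / sqrt (4 * d ^ 2 - t ^ 2)) with (t / (sqrt (4 * d ^ 2 - t ^ 2) / 2))
      by (field; lra).
    apply (my_ln_le (1 + Rsup E)); [lra|].
    apply Rplus_le_compat_l.
    apply Hlub2. intros r Hr. destruct (Hel r Hr) as [q ->].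
    apply elem_le; [lra | apply sumsq | apply sumsq | lra | ].
    replace ((sqrt (4 * d ^ 2 - t ^ 2) / 2) ^ 4) with (sqrt (4 * d ^ 2 - t ^ 2) ^ 4 / 16) by field.
    rewrite sqrt_pow4' by lra.
    set (sv := m1 - q).
    replace q with (m1 - sv) by (unfold sv; ring).
    replace ((x1 - (m1 - sv)) ^ 2 + (x2 - 0) ^ 2) with ((u1 + sv)^2 + (d+u2)^2)
      by (rewrite Hx1, Hx2; ring).
    replace ((y1 - (m1 - sv)) ^ 2 + (y2 - 0) ^ 2) with ((sv - u1)^2 + (d-u2)^2)
      by (rewrite Hy1, Hy2; ring).
    replace (((u1 + sv)^2 + (d+u2)^2) * ((sv - u1)^2 + (d-u2)^2)) with
        ((sv^2 + d^2 - (u1^2+u2^2))^2 + ((u1 + sv) * (d - u2) - (d + u2) * (sv - u1))^2) by ring.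
    rewrite Htt', HT2u.
    replace ((4 * d ^ 2 - 4 * (u1 ^ 2 + u2 ^ 2)) ^ 2 / 16) with ((d^2 - (u1^2 + u2^2))^2) by field.
    assert (Hpos : 0 < d ^ 2 - (u1 ^ 2 + u2 ^ 2)) by (rewrite Htt', HT2u in Hc; lra).
    pose proof (pow2_ge_0 sv).
    pose proof (pow2_ge_0 ((u1 + sv) * (d - u2) - (d + u2) * (sv - u1))).
    assert ((d ^ 2 - (u1 ^ 2 + u2 ^ 2)) ^ 2 <= (sv ^ 2 + d ^ 2 - (u1 ^ 2 + u2 ^ 2)) ^ 2).
    { apply pow_incr; lra. }
    lra.
Qed.
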